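(* Consider the lattice Boltzmann scheme described in the context under acoustic scaling, with a prepared initialisation $w_i=\sum_{\mathfrak{e}}w_{i,\mathfrak{e}}x^{\mathfrak{e}}$ (finitely supported coefficients) satisfying $$\sum_{\mathfrak{e}}w_{1,\mathfrak{e}}=1,\qquad \sum_{\mathfrak{e}}w_{1,\mathfrak{e}}\mathfrak{e}^{\mathfrak{n}}=0\ \text{ for every } |\mathfrak{n}|=1,$$ and, for every $r\in\{2,\dots,q\}$ with $\mathcal{G}_{1r}\neq0$, $\sum_{\mathfrak{e}}w_{r,\mathfrak{e}}=\epsilon_r$. Then for every $n\in\mathbb{N}^*$ the modified equation of the $n$-th starting scheme reads $\partial_t\phi(0,x)+\lambda(\mathcal{G}_{11}+\sum_{r=2}^q\mathcal{G}_{1r}\epsilon_r)\phi(0,x)=O(\Delta x)$, i.e. the starting schemes are consistent with the modified equation of the bulk finite difference scheme at order $O(\Delta x)$. Moreover the initial datum $m_1(0,\cdot)=w_1m_1^\circ$ is consistent with the initial datum of the Cauchy problem up to order $O(\Delta x^2)$, i.e. $(w_1\phi)(x)=\phi(x)+O(\Delta x^2)$ for smooth $\phi$.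
   Context: Fix $d\ge1$, $q\ge1$, velocities $c_1,\dots,c_q\in\mathbb{Z}^d$, invertible $M$, $S=\mathrm{diag}(s_1,\dots,s_q)$ with $s_i\in(0,2]$ for $i\ge2$, $\epsilon\in\mathbb{R}^q$, $\epsilon_1=1$, all independent of $\Delta x$; $K=I-S(I-\epsilon e_1^T)$; acoustic scaling $\Delta t=\Delta x/\lambda$ with $\lambda>0$ fixed. Shifts $(x_\ell\phi)(x)=\phi(x-\Delta xe_\ell)$, $x^{\mathfrak{e}}=\prod x_\ell^{\mathfrak{e}_\ell}$, $\mathfrak{e}^{\mathfrak{n}}=\prod\mathfrak{e}_\ell^{\mathfrak{n}_\ell}$. $T=M\mathrm{diag}(x^{c_1},\dots,x^{c_q})M^{-1}$, $E=TK$, $(z\phi)(t)=\phi(t+\Delta t)$. $\mathcal{G}=M\mathrm{diag}(c_1\cdot\nabla,\dots,c_q\cdot\nabla)M^{-1}$. The target Cauchy problem is $\partial_tu+V\cdot\nabla u=0$, $u(0,\cdot)=u^\circ$, with point-wise lattice discretisation $m_1^\circ$ of $u^\circ$. Initialisation $m(0,x)=w\,m_1^\circ(x)$. The $n$-th starting scheme is $m_1(n\Delta t,x)=(E^nw)_1m_1^\circ(x)$; its modified equation is obtained by substituting a smooth $\phi$ into $(z^n\phi)(0,x)=((E^nw)_1\phi(0,\cdot))(x)$, Taylor-expanding in $\Delta x$, and dividing the first-order terms by $n\Delta x/\lambda$. The bulk finite difference scheme is $z^{Q+1-q}\det(zI-E)m_1=0$ ($Q$ the number of $i\ge2$ with $s_i\ne1$),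 whose modified equation at leading order is $\partial_t\phi+\lambda(\mathcal{G}_{11}+\sum_{r\ge2}\mathcal{G}_{1r}\epsilon_r)\phi=O(\Delta x)$. *)

(* Defs.v *)
From HB Require Import structures.
From mathcomp Require Import all_boot all_order all_algebra.
From mathcomp Require Import all_classical all_reals all_analysis.
Set Implicit Arguments. Unset Strict Implicit. Unset Printing Implicit Defensive.
Import Order.TTheory GRing.Theory Num.Theory.
Import numFieldNormedType.Exports.
Local Open Scope ring_scope.

Fixpoint iterD {R : realType} {V : normedModType R} (vs : seq V) (f : V -> R)
  : V -> R :=
  if vs is v :: vs' then (fun a => 'D_v (iterD vs' f) a) else f.

Definition smooth {R : realType} {V : normedModType R} (f : V -> R) : Prop :=
  forall vs : seq V,
    continuous (iterD vs f) /\ (forall a v, derivable (iterD vs f) a v).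

Definition intvec {R : realType} {d : nat} (e : 'rV[int]_d) : 'rV[R]_d :=
  map_mx (fun z : int => z%:~R) e.

(* monomial of shifts x^e acting on a space function, step dx:
   (x^e f)(y) = f(y - dx e) *)
Definition shift {R : realType} {d : nat} (dx : R) (e : 'rV[int]_d)
  (f : 'rV[R]_d -> R) : 'rV[R]_d -> R :=
  fun y => f (y - dx *: intvec e).

Definition wop {R : realType} {d q : nat} (dx : R) (S : seq 'rV[int]_d)
  (Wc : 'I_q -> 'rV[int]_d -> R) (i : 'I_q) (f : 'rV[R]_d -> R)
  : 'rV[R]_d -> R :=
  fun y => \sum_(e <- S) Wc i e * shift dx e f y.

(* K = I - S (I - eps e_1^T), index 1 of the paper is ord0 *)
Definition Kmx {R : realType} {q : nat} (s eps : 'I_q.+1 -> R) : 'M[R]_q.+1 :=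
  1%:M - diag_mx (\row_i s i) *m
         (1%:M - (\col_i eps i) *m (\row_j (if j == ord0 then 1 else 0))).

(* E = T K with T = M diag(x^{c_1},...,x^{c_q}) M^{-1}, acting on a vector
   of space functions *)
Definition Eop {R : realType} {d q : nat} (dx : R) (c : 'I_q.+1 -> 'rV[int]_d)
  (M : 'M[R]_q.+1) (s eps : 'I_q.+1 -> R)
  (v : 'I_q.+1 -> ('rV[R]_d -> R)) : 'I_q.+1 -> ('rV[R]_d -> R) :=
  fun i y => \sum_j M i j *
     shift dx (c j)
       (fun z => \sum_k invmx M j k * \sum_l Kmx s eps k l * v l z) y.

Definition starting_scheme {R : realType} {d q : nat} (dx : R)
  (c : 'I_q.+1 -> 'rV[int]_d) (M : 'M[R]_q.+1) (s eps : 'I_q.+1 -> R)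
  (S : seq 'rV[int]_d) (Wc : 'I_q.+1 -> 'rV[int]_d -> R) (n : nat)
  (f : 'rV[R]_d -> R) : 'rV[R]_d -> R :=
  iter n (Eop dx c M s eps) (fun i => wop dx S Wc i f) ord0.

(* first-order constant-coefficient differential operators g . grad are
   represented by their coefficient vector g *)
Definition dop {R : realType} {d : nat} (g : 'rV[R]_d) (f : 'rV[R]_d -> R)
  (y : 'rV[R]_d) : R :=
  \sum_(l < d) g ord0 l * 'D_(delta_mx ord0 l) f y.

(* G = M diag(c_1.grad, ..., c_q.grad) M^{-1}, entry (i,r) as coefficient
   vector *)
Definition Gmx {R : realType} {d q : nat} (c : 'I_q.+1 -> 'rV[int]_d)
  (M : 'M[R]_q.+1) (i r : 'I_q.+1) : 'rV[R]_d :=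
  \sum_j (M i j * invmx M j r) *: intvec (c j).

(* Main.v *)
Require Import Defs.
From HB Require Import structures.
From mathcomp Require Import all_boot all_order all_algebra.
From mathcomp Require Import all_classical all_reals all_analysis.
Import Order.TTheory GRing.Theory Num.Theory.
Import numFieldNormedType.Exports.
Local Open Scope ring_scope.
From mathcomp Require Import lra ring.

Section A.
Context {R : realType} {V W : normedModType R}.

Lemma derive_ext_dir (F : V -> R) (G : W -> R) a v b w :
  (forall h : R, F (h *: v + a) = G (h *: w + b)) ->
  'D_v F a = 'D_w G b /\ (derivable F a v <-> derivable G b w).
Proof.
move=> H.
have e0 : F a = G b by have := H 0; rewrite !scale0r !add0r.
have E : (fun h : R => h^-1 *: ((F \o shift a) (h *: v) - F a)) =
         (fun h : R => h^-1 *: ((G \o shift b) (h *: w) - G b)).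
  by apply/funext => h /=; rewrite /shift H e0.
by rewrite /derive /derivable E.
Qed.

Lemma cont_ball (f : V -> R) x : {for x, continuous f} ->
  exists2 e, 0 < e & forall z, `|z - x| < e -> `|f z - f x| < 1.
Proof.
move=> /cvgr_dist_lt /(_ 1 ltr01).
move=> /nbhs_normP [e e0 He]; exists e => // z zx.
rewrite distrC; apply: (He z) => /=; by rewrite distrC.
Qed.

End A.
Section A2.
Context {R : realType} {V : normedModType R}.
Lemma mvt_any (g : R -> R) a b : (forall t, derivable g t 1) ->
  exists c, `|c - a| <= `|b - a| /\ g b - g a = 'D_1 g c * (b - a).
Proof.
move=> H.
have gc : continuous g.
  by move=> t; apply: differentiable_continuous; apply/derivable1_diffP.
have gd : forall x : R, is_derive x (1:R) g ('D_1 g x) by move=> x; apply: derivableP.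
case: (lerP a b) => ab.
  have [c cab E] := MVT_segment ab (fun x _ => gd x) (continuous_subspaceT gc).
  exists c; split => //.
  move: cab; rewrite in_itv /= => /andP[h1 h2].
  rewrite !ger0_norm ?subr_ge0 //; lra.
have [c cab E] := MVT_segment (ltW ab) (fun x _ => gd x) (continuous_subspaceT gc).
exists c; split.
  move: cab; rewrite in_itv /= => /andP[h1 h2].
  rewrite !ler0_norm ?subr_le0 //; try lra.
by rewrite -opprB E -mulrN opprB.
Qed.

Lemma along_deriv (f : V -> R) (w y : V) (t : R) :
  'D_1 (fun u : R => f (u *: w + y)) t = 'D_w f (t *: w + y) /\
  (derivable (fun u : R => f (u *: w + y)) t 1 <-> derivable f (t *: w + y) w).
Proof.
apply: derive_ext_dir => h.
by rewrite [h *: 1]mulr1 scalerDl addrA.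
Qed.

Lemma taylorU (f : V -> R) : smooth f -> forall x w : V,
  exists C delta : R, 0 < delta /\ forall y (h : R), `|y - x| < delta -> `|h| < delta ->
   `|f (h *: w + y) - f y - h * 'D_w f y| <= C * h ^+ 2.
Proof.
move=> sf x w.
pose f1 := fun a => 'D_w f a.
pose f2 := fun a => 'D_w f1 a.
have d0 : forall a, derivable f a w by move=> a; exact: (sf [::]).2.
have d1 : forall a, derivable f1 a w by move=> a; exact: (sf [:: w]).2.
have c2 : continuous f2 by exact: (sf [:: w; w]).1.
have [e e0 He] := @cont_ball _ _ _ _ (c2 x).
exists (`|f2 x| + 1), (e / (`|w| + 1)); split.
  by rewrite divr_gt0 // ltr_wpDl.
move=> y h yx hd.
pose g := fun u : R => f (u *: w + y).
pose g1 := fun u : R => f1 (u *: w + y).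
have gd : forall t, derivable g t 1 by move=> t; apply/(along_deriv f w y t).2.
have g1d : forall t, derivable g1 t 1 by move=> t; apply/(along_deriv f1 w y t).2.
have [xi [xih Exi]] := mvt_any _ 0 h gd.
have [eta [etaxi Eeta]] := mvt_any _ 0 xi g1d.
rewrite !subr0 in xih etaxi Exi Eeta.
rewrite (along_deriv f w y xi).1 in Exi.
rewrite (along_deriv f1 w y eta).1 in Eeta.
have -> : f (h *: w + y) - f y - h * 'D_w f y = h * xi * f2 (eta *: w + y).
  move: Exi Eeta; rewrite /g /g1 /f1 !scale0r !add0r => E1 E2.
  have -> : f (h *: w + y) = f y + 'D_w f (xi *: w + y) * h by rewrite -E1; ring.
  have -> : 'D_w f (xi *: w + y) = 'D_w f y + 'D_w ('D_w f) (eta *: w + y) * xi by rewrite -E2; ring.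
  rewrite /f2 /f1; ring.
have wpos : 0 < `|w| + 1 by rewrite ltr_wpDl.
have hb : `|f2 (eta *: w + y)| <= `|f2 x| + 1.
  have : `|eta *: w + y - x| < e.
    rewrite -addrA; apply: (le_lt_trans (ler_normD _ _)).
    rewrite normrZ.
    have : `|h| * (`|w| + 1) < e by rewrite -ltr_pdivlMr.
    have : `|y - x| * (`|w| + 1) < e by rewrite -ltr_pdivlMr.
    have := normr_ge0 w; have := normr_ge0 h; have := normr_ge0 (y - x).
    have := normr_ge0 eta. nra.
  move/He => H; have := ler_normD (f2 (eta *: w + y) - f2 x) (f2 x).
  rewrite subrK; lra.
have hh : h ^+ 2 = `|h| * `|h| by rewrite -normrM ger0_norm ?sqr_ge0 // expr2.
rewrite !normrM hh.
apply: (@le_trans _ _ (`|h| * `|h| * `|f2 (eta *: w + y)|)).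
  by apply: ler_wpM2r => //; apply: ler_wpM2l.
by rewrite mulrC; apply: ler_wpM2r => //; rewrite mulr_ge0.
Qed.
End A2.
Arguments derive_ext_dir {R V W F G a v b w}.
Section A3.
Context {R : realType} {V : normedModType R}.

Lemma iterD_cat (f : V -> R) vs us : Defs.iterD vs (Defs.iterD us f) = Defs.iterD (vs ++ us) f.
Proof. by elim: vs => //= v vs ->. Qed.

Lemma smooth_iterD (f : V -> R) us : smooth f -> smooth (Defs.iterD us f).
Proof. by move=> sf vs; rewrite iterD_cat; apply: sf. Qed.

Lemma lipU (f : V -> R) : smooth f -> forall x w : V,
  exists C delta : R, 0 < delta /\ forall y (h : R), `|y - x| < delta -> `|h| < delta ->
   `|f (h *: w + y) - f y| <= C * `|h|.
Proof.
move=> sf x w.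
have [C1 [d1 [d10 H1]]] := @taylorU _ _ f sf x w.
have c1 : continuous (fun a => 'D_w f a) by exact: (sf [:: w]).1.
have [e e0 He] := @cont_ball _ _ _ _ (c1 x).
exists (`|'D_w f x| + 1 + `|C1|), (Num.min d1 (Num.min e 1)); split.
  by rewrite !lt_min d10 e0 ltr01.
move=> y h; rewrite !lt_min => /and3P[yx1 yx2 _] /and3P[hd1 _ h1].
have := H1 y h yx1 hd1.
have := He y yx2.
set A := f (h *: w + y) - f y.
set B := 'D_w f y.
move=> HB HA.
have hB : `|B| <= `|'D_w f x| + 1.
  have := ler_normD (B - 'D_w f x) ('D_w f x); rewrite subrK; lra.
have hh : h ^+ 2 = `|h| * `|h| by rewrite -normrM ger0_norm ?sqr_ge0 // expr2.
rewrite hh in HA.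
have := ler_normD (A - h * B) (h * B); rewrite subrK normrM => HT.
have hC : C1 * (`|h| * `|h|) <= `|C1| * `|h|.
  apply: (le_trans (ler_wpM2r _ (real_ler_norm (num_real C1)))).
    by rewrite mulr_ge0.
  apply: ler_wpM2l => //; have := normr_ge0 h; nra.
have := normr_ge0 h; have := normr_ge0 B; nra.
Qed.


Lemma taylorM (f : V -> R) : smooth f -> forall (x : V) (ws : seq (R * V)),
  exists C delta : R, 0 < delta /\ forall y (h : R), `|y - x| < delta -> `|h| < delta ->
   `|f (h *: (\sum_(p <- ws) p.1 *: p.2) + y) - f y
      - h * \sum_(p <- ws) p.1 * 'D_(p.2) f y| <= C * h ^+ 2.
Proof.
move=> sf x; elim => [|[b u] ws [CI [dI [dI0 HI]]]].
  exists 0, 1; split => // y h _ _.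
  by rewrite !big_nil scaler0 add0r mulr0 !subrr normr0 mul0r.
have [CU [dU [dU0 HU]]] := @taylorU _ _ f sf x u.
set s' := \sum_(p <- ws) p.1 *: p.2.
have [CL [dL [dL0 HL]]] := lipU _ (smooth_iterD f [:: u] sf) x s'.
set K := 2 * (`|b| + 1) * (`|s'| + 1).
have K2 : 2 <= K.
  rewrite /K; have := normr_ge0 b; have := normr_ge0 s'; nra.
have K0 : 0 < K by lra.
exists (CU * b ^+ 2 + `|b| * CL + CI), (Num.min dI (Num.min dL (dU / K))).
split; first by rewrite !lt_min dI0 dL0 divr_gt0.
move=> y h; rewrite !lt_min => /and3P[yI yL yU] /and3P[hI hL hU].
rewrite !big_cons /=.
set y' := h *: s' + y.
have Ey : h *: (b *: u + s') + y = (h * b) *: u + y'.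
  by rewrite /y' scalerDr scalerA addrA.
rewrite Ey.
have yUK : `|y - x| * K < dU by rewrite -ltr_pdivlMr.
have hUK : `|h| * K < dU by rewrite -ltr_pdivlMr.
have nb := normr_ge0 b; have ns := normr_ge0 s'; have nh := normr_ge0 h.
have nyx := normr_ge0 (y - x).
have y'x : `|y' - x| < dU.
  rewrite /y' -addrA; apply: (le_lt_trans (ler_normD _ _)); rewrite normrZ.
  have k1 : 2 * (`|s'| + 1) <= K by rewrite /K; nra.
  set P := `|h| + `|y - x|.
  have P0 : 0 <= P by rewrite /P; lra.
  have k2 : P * (2 * (`|s'| + 1)) <= P * K by apply: ler_wpM2l.
  have k3 : `|h| * `|s'| + `|y - x| <= P * (`|s'| + 1) by rewrite /P; nra.
  have k4 : P * K = `|h| * K + `|y - x| * K by rewrite /P mulrDl.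
  have k5 : P * (2 * (`|s'| + 1)) = 2 * (P * (`|s'| + 1)) by ring.
  lra.
have hbU : `|h * b| < dU.
  rewrite normrM.
  have k1 : 2 * (`|b| + 1) <= K by rewrite /K; nra.
  have k2 : `|h| * (2 * (`|b| + 1)) <= `|h| * K by apply: ler_wpM2l.
  nra.
have T1 := HU y' (h * b) y'x hbU.
have T2 := HL y h yL hL.
have T3 := HI y h yI hI.
rewrite -/y' in T2 T3.
set A1 := f ((h * b) *: u + y') - f y' - h * b * 'D_u f y'.
set A2 := 'D_u f y' - 'D_u f y.
set A3 := f y' - f y - h * \sum_(p <- ws) p.1 * 'D_(p.2) f y.
have -> : f ((h * b) *: u + y') - f y - h * (b * 'D_u f y + \sum_(p <- ws) p.1 * 'D_(p.2) f y)
   = A1 + h * b * A2 + A3 by rewrite /A1 /A2 /A3; ring.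
have hA2 : `|h * b * A2| <= `|b| * CL * h ^+ 2.
  rewrite !normrM.
  have hh : h ^+ 2 = `|h| * `|h| by rewrite -normrM ger0_norm ?sqr_ge0 // expr2.
  rewrite hh.
  have k := ler_wpM2l (mulr_ge0 nh nb) T2.
  have -> : `|b| * CL * (`|h| * `|h|) = `|h| * `|b| * (CL * `|h|) by ring.
  exact: k.
have e1 := ler_normD (A1 + h * b * A2) A3.
have e2 := ler_normD A1 (h * b * A2).
have : (h * b) ^+ 2 = b ^+ 2 * h ^+ 2 by rewrite exprMn mulrC.
move=> hb2; rewrite hb2 in T1.
have : CU * (b ^+ 2 * h ^+ 2) + `|b| * CL * h ^+ 2 + CI * h ^+ 2 =
       (CU * b ^+ 2 + `|b| * CL + CI) * h ^+ 2 by ring.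
lra.
Qed.

End A3.

Section G.
Context {R : realType} {V : normedModType R}.

Definition BO (k : nat) (x : V) (E : R -> V -> R) :=
  exists C delta : R, 0 < delta /\ forall h y, 0 < h < delta -> `|y - x| < delta ->
    `|E h y| <= C * h ^+ k.

Lemma BO_ext k x E E' : (forall h y, E h y = E' h y) -> BO k x E' -> BO k x E.
Proof.
move=> e [C [dl [d0 H]]]; exists C, dl; split => // h y hd yd.
by rewrite e; apply: H.
Qed.

Lemma BO_0 k x : BO k x (fun _ _ => 0).
Proof. by exists 0, 1; split => // h y _ _; rewrite normr0 mul0r. Qed.

Lemma BO_add k x E1 E2 : BO k x E1 -> BO k x E2 -> BO k x (fun h y => E1 h y + E2 h y).
Proof.
move=> [C1 [d1 [d10 H1]]] [C2 [d2 [d20 H2]]].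
exists (C1 + C2), (Num.min d1 d2); split; first by rewrite lt_min d10 d20.
move=> h y /andP[h0]; rewrite !lt_min => /andP[hd1 hd2] /andP[yd1 yd2].
have := H1 h y (ltac:(by rewrite h0 hd1)) yd1.
have := H2 h y (ltac:(by rewrite h0 hd2)) yd2.
have := ler_normD (E1 h y) (E2 h y).
rewrite mulrDl; lra.
Qed.

Lemma BO_scale k x a E : BO k x E -> BO k x (fun h y => a * E h y).
Proof.
move=> [C [dl [d0 H]]]; exists (`|a| * C), dl; split => // h y hd yd.
rewrite normrM -mulrA; apply: ler_wpM2l => //; exact: H.
Qed.

Lemma BO_sum (I : Type) (s : seq I) k x (E : I -> R -> V -> R) :
  (forall i, BO k x (E i)) -> BO k x (fun h y => \sum_(i <- s) E i h y).
Proof.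
move=> H; elim: s => [|i s IH].
  by apply: (@BO_ext k x _ (fun _ _ => 0)) => [h y|]; rewrite ?big_nil //; apply: BO_0.
apply: (@BO_ext k x _ (fun h y => E i h y + \sum_(j <- s) E j h y)).
  by move=> h y; rewrite big_cons.
exact: BO_add.
Qed.

Lemma BO_mulh k x E : BO k x E -> BO k.+1 x (fun h y => h * E h y).
Proof.
move=> [C [dl [d0 H]]]; exists C, dl; split => // h y hd yd.
have h0 : 0 <= h by case/andP: hd => /ltW.
rewrite normrM ger0_norm // exprS mulrCA; apply: ler_wpM2l => //; exact: H.
Qed.

Lemma BO_shift k x (v : V) E : BO k x E -> BO k x (fun h y => E h (y - h *: v)).
Proof.
move=> [C [dl [d0 H]]].
set K := 2 * (`|v| + 1).
have K0 : 0 < K by rewrite /K; have := normr_ge0 v; lra.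
exists C, (dl / K); split; first by rewrite divr_gt0.
move=> h y /andP[h0 hd] yd; apply: H.
  rewrite h0 /=; move: hd; rewrite ltr_pdivlMr //; rewrite /K.
  have := normr_ge0 v; nra.
have e : y - h *: v - x = (y - x) + (- (h *: v)) by rewrite addrAC.
rewrite e; apply: (le_lt_trans (ler_normD _ _)); rewrite normrN normrZ ger0_norm ?ltW //.
move: hd yd; rewrite !ltr_pdivlMr // /K => hd yd.
have := normr_ge0 v; have := normr_ge0 (y - x); nra.
Qed.

End G.
Arguments BO_ext {R V k x E E'}.
Arguments BO_add {R V k x E1 E2}.
Arguments BO_scale {R V k x} a {E}.
Arguments BO_sum {R V I} s {k x E}.
Arguments BO_mulh {R V k x E}.
Arguments BO_shift {R V k x} v {E}.

Section H.
Context {R : realType} {d : nat}.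
Local Notation V := 'rV[R]_d.

Lemma dopD (B1 B2 : V) f y : dop (B1 + B2) f y = dop B1 f y + dop B2 f y.
Proof. by rewrite /dop -big_split; apply: eq_bigr => l _; rewrite mxE mulrDl. Qed.

Lemma dopZ a (B : V) f y : dop (a *: B) f y = a * dop B f y.
Proof. by rewrite /dop mulr_sumr; apply: eq_bigr => l _; rewrite mxE mulrA. Qed.

Lemma dop0 f y : dop (0 : V) f y = 0.
Proof. by rewrite /dop big1 // => l _; rewrite mxE mul0r. Qed.

Lemma dopN (B : V) f y : dop (- B) f y = - dop B f y.
Proof. by rewrite -scaleN1r dopZ mulN1r. Qed.

Lemma dopB (B1 B2 : V) f y : dop (B1 - B2) f y = dop B1 f y - dop B2 f y.
Proof. by rewrite dopD dopN. Qed.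

Lemma dop_sum (I : Type) (s : seq I) (B : I -> V) f y :
  dop (\sum_(i <- s) B i) f y = \sum_(i <- s) dop (B i) f y.
Proof.
elim: s => [|i s IH]; first by rewrite !big_nil dop0.
by rewrite !big_cons dopD IH.
Qed.

Definition Good (f : V -> R) (g : R -> V -> R) (A : R) (B : V) :=
  forall x, BO 2 x (fun h y => g h y - (A * f y + h * dop B f y)).

Lemma Good_ext f g g' A B : (forall h y, g h y = g' h y) -> Good f g' A B -> Good f g A B.
Proof. by move=> e H x; apply: BO_ext (H x) => h y; rewrite e. Qed.

Lemma Good_f f : Good f (fun _ y => f y) 1 0.
Proof.
move=> x; apply: BO_ext (BO_0 2 x) => h y.
by rewrite dop0 mulr0 addr0 mul1r subrr.
Qed.

Lemma Good_add f g1 g2 A1 A2 B1 B2 : Good f g1 A1 B1 -> Good f g2 A2 B2 ->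
  Good f (fun h y => g1 h y + g2 h y) (A1 + A2) (B1 + B2).
Proof.
move=> H1 H2 x; apply: BO_ext (BO_add (H1 x) (H2 x)) => h y.
rewrite dopD; ring.
Qed.

Lemma Good_scale f g A B a : Good f g A B ->
  Good f (fun h y => a * g h y) (a * A) (a *: B).
Proof.
move=> H x; apply: BO_ext (BO_scale a (H x)) => h y.
rewrite dopZ; ring.
Qed.

Lemma Good_sum (I : Type) (s : seq I) f (g : I -> R -> V -> R) A B :
  (forall i, Good f (g i) (A i) (B i)) ->
  Good f (fun h y => \sum_(i <- s) g i h y) (\sum_(i <- s) A i) (\sum_(i <- s) B i).
Proof.
move=> H x; apply: BO_ext (BO_sum s (fun i => H i x)) => h y.
rewrite dop_sum big_distrl /= mulr_sumr -big_split /= -sumrB.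
by apply: eq_bigr.
Qed.


Lemma Good_shift f (sf : smooth f) g A B (v : V) : Good f g A B ->
  Good f (fun h y => g h (y - h *: v)) A (B - A *: v).
Proof.
move=> H x.
pose ws := map (fun l : 'I_d => (- v ord0 l, delta_mx ord0 l : V)) (index_enum 'I_d).
have ht : BO 2 x (fun h y => f (y - h *: v) - f y + h * dop v f y).
  have [C [dl [d0 Ht]]] := taylorM _ sf x ws.
  exists C, dl; split => // h y /andP[h0 hd] yd.
  have := Ht y h yd (ltac:(by rewrite ger0_norm ?ltW)).
  rewrite /ws !big_map /=.
  have -> : \sum_(l <- index_enum 'I_d) - v ord0 l *: (delta_mx ord0 l : V) = - v.
    by rewrite [in RHS](row_sum_delta v) -sumrN; apply: eq_bigr => l _; rewrite scaleNr.
  have -> : \sum_(l <- index_enum 'I_d) - v ord0 l * 'D_(delta_mx ord0 l : V) f y = - dop v f y.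
    by rewrite /dop -sumrN; apply: eq_bigr => l _; rewrite mulNr.
  by rewrite scalerN (addrC (- _)) mulrN opprK.
have hl : BO 1 x (fun h y => dop B f (y - h *: v) - dop B f y).
  apply: (@BO_ext _ _ _ _ _ (fun h y => \sum_(l < d) B ord0 l *
        ('D_(delta_mx ord0 l : V) f (y - h *: v) - 'D_(delta_mx ord0 l : V) f y))).
    by move=> h y; rewrite /dop -sumrB; apply: eq_bigr => l _; rewrite mulrBr.
  apply: BO_sum => l; apply: BO_scale.
  have [C [dl [d0 Hl]]] := lipU _ (smooth_iterD f [:: delta_mx ord0 l] sf) x (- v).
  exists C, dl; split => // h y /andP[h0 hd] yd.
  have hn : `|h| < dl by rewrite ger0_norm ?ltW.
  have := Hl y h yd hn; rewrite /= scalerN (addrC (- _)) (ger0_norm (ltW h0)).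
  by rewrite expr1.
apply: BO_ext (BO_add (BO_add (BO_shift v (H x)) (BO_scale A ht)) (BO_mulh hl)).
move=> h y /=; rewrite dopB dopZ; ring.
Qed.

End H.

Section S.
Variables (R : realType) (d q : nat).
Local Notation V := 'rV[R]_d.
Variables (c : 'I_q.+1 -> 'rV[int]_d) (M : 'M[R]_q.+1) (s eps : 'I_q.+1 -> R)
  (S : seq 'rV[int]_d) (Wc : 'I_q.+1 -> 'rV[int]_d -> R) (f : V -> R) (sf : smooth f).

Lemma Good_wop i : Good f (fun h y => wop h S Wc i f y)
  (\sum_(e <- S) Wc i e * 1) (\sum_(e <- S) Wc i e *: (0 - 1 *: intvec e)).
Proof.
apply: (@Good_ext _ _ f _ (fun h y => \sum_(e <- S) Wc i e * f (y - h *: intvec e))) => //.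
apply: (@Good_sum _ _ _ S f (fun e h y => Wc i e * f (y - h *: intvec e))) => e.
apply: (@Good_scale _ _ f (fun h y => f (y - h *: intvec e))).
apply: (@Good_shift _ _ f sf (fun _ y => f y)).
exact: Good_f.
Qed.

Definition Ain (A : 'I_q.+1 -> R) j := \sum_k invmx M j k * \sum_l Kmx s eps k l * A l.
Definition Bin (B : 'I_q.+1 -> V) j := \sum_k invmx M j k *: \sum_l Kmx s eps k l *: B l.
Definition Anext A i := \sum_j M i j * Ain A j.
Definition Bnext A B i := \sum_j M i j *: (Bin B j - Ain A j *: intvec (c j)).

Lemma Good_Eop (v : R -> 'I_q.+1 -> V -> R) A B :
  (forall l, Good f (fun h => v h l) (A l) (B l)) ->
  forall i, Good f (fun h => Eop h c M s eps (v h) i) (Anext A i) (Bnext A B i).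
Proof.
move=> H i.
pose inner j := fun h z => \sum_k invmx M j k * \sum_l Kmx s eps k l * v h l z.
have Hin : forall j, Good f (inner j) (Ain A j) (Bin B j).
  move=> j.
  apply: (@Good_sum _ _ _ _ f (fun k h z => invmx M j k * \sum_l Kmx s eps k l * v h l z)) => k.
  apply: (@Good_scale _ _ f (fun h z => \sum_l Kmx s eps k l * v h l z)).
  apply: (@Good_sum _ _ _ _ f (fun l h z => Kmx s eps k l * v h l z)) => l.
  exact: Good_scale.
apply: (@Good_ext _ _ f _ (fun h y => \sum_j M i j * inner j h (y - h *: intvec (c j)))) => //.
apply: (@Good_sum _ _ _ _ f (fun j h y => M i j * inner j h (y - h *: intvec (c j)))) => j.
apply: (@Good_scale _ _ f (fun h y => inner j h (y - h *: intvec (c j)))).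
exact: Good_shift.
Qed.

Fixpoint An n : 'I_q.+1 -> R :=
  if n is n'.+1 then Anext (An n') else fun i => \sum_(e <- S) Wc i e * 1.
Fixpoint Bn n : 'I_q.+1 -> V :=
  if n is n'.+1 then Bnext (An n') (Bn n') else fun i => \sum_(e <- S) Wc i e *: (0 - 1 *: intvec e).

Lemma Good_iter n i :
  Good f (fun h => iter n (Eop h c M s eps) (fun i => wop h S Wc i f) i) (An n i) (Bn n i).
Proof.
elim: n i => [|n IH] i /=; first exact: Good_wop.
exact: (@Good_Eop (fun h => iter n (Eop h c M s eps) (fun i => wop h S Wc i f))) => l; exact: IH.
Qed.

End S.
Section Alg.
Variables (R : realType) (d q : nat).
Local Notation V := 'rV[R]_d.
Variables (c : 'I_q.+1 -> 'rV[int]_d) (M : 'M[R]_q.+1) (s eps : 'I_q.+1 -> R).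
Hypothesis hM : M \in unitmx.
Hypothesis heps : eps ord0 = 1.

Lemma Kmx_E k l : Kmx s eps k l =
  (k == l)%:R - s k * ((k == l)%:R - eps k * (l == ord0)%:R).
Proof.
rewrite /Kmx mxE mul_diag_mx !mxE big_ord1 !mxE.
by case: (l == ord0).
Qed.

Lemma sum_deltaV (W : lmodType R) n (Y : 'I_n -> W) k :
  \sum_l (k == l)%:R *: Y l = Y k.
Proof.
rewrite (bigD1 k) //= eqxx scale1r big1 ?addr0 // => l lk.
by rewrite eq_sym (negbTE lk) scale0r.
Qed.

Lemma sum_deltaR n (Y : 'I_n -> R) k : \sum_l (k == l)%:R * Y l = Y k.
Proof.
rewrite (bigD1 k) //= eqxx mul1r big1 ?addr0 // => l lk.
by rewrite eq_sym (negbTE lk) mul0r.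
Qed.

Lemma sum_delta0R (Y : 'I_q.+1 -> R) : \sum_l (l == ord0)%:R * Y l = Y ord0.
Proof. by rewrite -(sum_deltaR _ Y ord0); apply: eq_bigr => l _; rewrite eq_sym. Qed.

Lemma sum_delta0V (W : lmodType R) (Y : 'I_q.+1 -> W) : \sum_l (l == ord0)%:R *: Y l = Y ord0.
Proof. by rewrite -(sum_deltaV _ _ Y ord0); apply: eq_bigr => l _; rewrite eq_sym. Qed.

Lemma KsumR (A : 'I_q.+1 -> R) k :
  \sum_l Kmx s eps k l * A l = A k - s k * (A k - eps k * A ord0).
Proof.
under eq_bigr do rewrite Kmx_E.
have e1 := sum_deltaR _ A k; have e2 := sum_delta0R A.
transitivity (\sum_l ((k == l)%:R * A l) - s k * (\sum_l ((k == l)%:R * A l)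
   - eps k * \sum_l ((l == ord0)%:R * A l))); last by rewrite e1 e2.
rewrite [eps k * _]mulr_sumr -sumrB [s k * _]mulr_sumr -sumrB.
apply: eq_bigr => l _; ring.
Qed.

Lemma KsumV (B : 'I_q.+1 -> V) k :
  \sum_l Kmx s eps k l *: B l = B k - s k *: (B k - eps k *: B ord0).
Proof.
under eq_bigr do rewrite Kmx_E.
have e1 := sum_deltaV _ _ B k; have e2 := sum_delta0V _ B.
transitivity (\sum_l ((k == l)%:R *: B l) - s k *: (\sum_l ((k == l)%:R *: B l)
   - eps k *: \sum_l ((l == ord0)%:R *: B l))); last by rewrite e1 e2.
rewrite [eps k *: _]scaler_sumr -sumrB [s k *: _]scaler_sumr -sumrB.
apply: eq_bigr => l _.
by rewrite !scalerBr !scalerBl !scalerA mulrBr scalerBl.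
Qed.


Lemma MMinvR (X : 'I_q.+1 -> R) i : \sum_j M i j * (\sum_k invmx M j k * X k) = X i.
Proof.
under eq_bigr do rewrite mulr_sumr.
rewrite exchange_big /=.
transitivity (\sum_k (M *m invmx M) i k * X k).
  apply: eq_bigr => k _; rewrite mxE mulr_suml; apply: eq_bigr => j _; by rewrite mulrA.
rewrite mulmxV //; under eq_bigr do rewrite mxE.
exact: sum_deltaR.
Qed.

Lemma MMinvV (Y : 'I_q.+1 -> V) i : \sum_j M i j *: (\sum_k invmx M j k *: Y k) = Y i.
Proof.
under eq_bigr do rewrite scaler_sumr.
rewrite exchange_big /=.
transitivity (\sum_k (M *m invmx M) i k *: Y k).
  apply: eq_bigr => k _; rewrite mxE scaler_suml; apply: eq_bigr => j _; by rewrite scalerA.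
rewrite mulmxV //; under eq_bigr do rewrite mxE.
exact: sum_deltaV.
Qed.

Local Notation Anx := (@Anext R q M s eps).
Local Notation Bnx := (@Bnext R d q c M s eps).

Lemma Anext_E A i : Anx A i = A i - s i * (A i - eps i * A ord0).
Proof.
by rewrite /Anext /Ain (MMinvR (fun k => \sum_l Kmx s eps k l * A l)) KsumR.
Qed.

Lemma Bnext0 A B : Bnx A B ord0 =
  B ord0 - \sum_k (A k - s k * (A k - eps k * A ord0)) *: Gmx c M ord0 k.
Proof.
rewrite /Bnext.
under eq_bigr do rewrite scalerBr.
rewrite sumrB /Bin (MMinvV (fun k => \sum_l Kmx s eps k l *: B l)) KsumV heps scale1r subrr scaler0 subr0.
congr (_ - _).
rewrite /Ain /Gmx.
transitivity (\sum_j \sum_k (M ord0 j * (invmx M j k * \sum_l Kmx s eps k l * A l)) *: intvec (c j)).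
  apply: eq_bigr => j _; rewrite scalerA mulr_sumr scaler_suml //.
rewrite exchange_big /=; apply: eq_bigr => k _.
rewrite KsumR scaler_sumr; apply: eq_bigr => j _; rewrite scalerA; congr (_ *: _); ring.
Qed.

Definition Inv (A : 'I_q.+1 -> R) :=
  A ord0 = 1 /\ forall r, r != ord0 -> Gmx c M ord0 r != 0 -> A r = eps r.

Lemma Inv_next A : Inv A -> Inv (Anx A).
Proof.
move=> [h0 hr]; split; first by rewrite Anext_E h0 heps; ring.
by move=> r r0 g0; rewrite Anext_E h0 (hr r r0 g0); ring.
Qed.

Definition Gs := \sum_k eps k *: Gmx c M ord0 k.

Lemma Inv_sum A : Inv A ->
  \sum_k (A k - s k * (A k - eps k * A ord0)) *: Gmx c M ord0 k = Gs.
Proof.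
move=> [h0 hr]; apply: eq_bigr => k _.
case: (eqVneq k ord0) => [->|k0].
  by rewrite h0 heps; congr (_ *: _); ring.
case: (eqVneq (Gmx c M ord0 k) 0) => [->|g0]; first by rewrite !scaler0.
by rewrite h0 (hr k k0 g0); congr (_ *: _); ring.
Qed.

End Alg.

Section Sl.
Context {R : realType} {d : nat}.
Local Notation V := 'rV[R]_d.

Lemma pair_lin (h : R) (a1 : R) (a2 b2 : V) (b1 : R) :
  h *: (a1, a2) + (b1, b2) = (h * a1 + b1, h *: a2 + b2) :> R * V.
Proof. by []. Qed.

Lemma iterD_slice (phi : R * V -> R) vs :
  Defs.iterD vs (fun y : V => phi (0, y)) =
  fun y => Defs.iterD (map (fun v => ((0:R), v)) vs) phi (0, y).
Proof.
elim: vs => //= v vs ->; apply/funext => a.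
apply: (derive_ext_dir _).1 => h /=.
by rewrite pair_lin mulr0 add0r.
Qed.

Lemma cont_pair0 (U W : normedModType R) (a : W) : continuous (fun y0 : U => (a, y0)).
Proof. move=> z. apply: cvg_pair => /=; [exact: cvg_cst | exact: cvg_id]. Qed.

Lemma smooth_slice (phi : R * V -> R) : smooth phi -> smooth (fun y : V => phi (0, y)).
Proof.
move=> sp vs; rewrite iterD_slice.
set G := Defs.iterD _ phi; split.
  move=> y; apply: continuous_comp; last exact: (sp _).1.
  exact: cont_pair0.
move=> a v.
have H : forall h : R, (fun y : V => G ((0:R), y)) (h *: v + a) = G (h *: ((0:R), v) + ((0:R), a)).
  by move=> h /=; rewrite pair_lin mulr0 add0r.
apply/(derive_ext_dir H).2; exact: (sp _).2.
Qed.

Lemma time_deriv (phi : R * V -> R) x :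
  'D_1 (fun t : R => phi (t, x)) 0 = 'D_((1:R), (0:V)) phi ((0:R), x).
Proof.
apply: (derive_ext_dir _).1 => h /=.
by rewrite pair_lin [h *: 1]mulr1 mulr1 scaler0 add0r.
Qed.
End Sl.

Lemma final_alg (R : realType) (a b F Dt D C1 C2 dx lam nn : R) : 0 < dx -> 0 < lam -> 0 < nn ->
  `|b - (1 * F + dx * (- nn * D))| <= C1 * dx ^+ 2 ->
  `|a - F - nn * (dx / lam) * Dt| <= C2 * (nn * (dx / lam)) ^+ 2 ->
  `|(a - b) / (nn * dx / lam) - (Dt + lam * D)| <= (C2 * nn / lam + C1 * lam / nn) * dx.
Proof.
move=> dx0 l0 n0 H1 H2.
have P0 : 0 < nn * dx / lam by rewrite divr_gt0 // mulr_gt0.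
have l0' : lam != 0 by rewrite gt_eqF.
have n0' : nn != 0 by rewrite gt_eqF.
have d0' : dx != 0 by rewrite gt_eqF.
have -> : (a - b) / (nn * dx / lam) - (Dt + lam * D) =
  ((a - F - nn * (dx / lam) * Dt) - (b - (1 * F + dx * (- nn * D)))) / (nn * dx / lam).
  by field; rewrite l0' d0' n0'.
rewrite normrM normfV (gtr0_norm P0) ler_pdivrMr //.
apply: (le_trans (ler_normB _ _)).
have -> : (C2 * nn / lam + C1 * lam / nn) * dx * (nn * dx / lam) =
   C2 * (nn * (dx / lam)) ^+ 2 + C1 * dx ^+ 2 by field; rewrite l0' n0'.
lra.
Qed.
Theorem corollary2 (R : realType) (d q : nat) (hd : (0 < d)%N)
  (c : 'I_q.+1 -> 'rV[int]_d) (M : 'M[R]_q.+1) (hM : M \in unitmx)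
  (s eps : 'I_q.+1 -> R)
  (hs : forall i : 'I_q.+1, i != ord0 -> 0 < s i <= 2)
  (heps : eps ord0 = 1)
  (lam : R) (hlam : 0 < lam)
  (S : seq 'rV[int]_d) (hS : uniq S)
  (Wc : 'I_q.+1 -> 'rV[int]_d -> R)
  (hWsupp : forall i e, e \notin S -> Wc i e = 0)
  (hW0 : \sum_(e <- S) Wc ord0 e = 1)
  (hW1 : forall l : 'I_d, \sum_(e <- S) Wc ord0 e * (e ord0 l)%:~R = 0)
  (hWr : forall r : 'I_q.+1, r != ord0 -> Gmx c M ord0 r != 0 ->
           \sum_(e <- S) Wc r e = eps r) :
  (forall (n : nat), (0 < n)%N ->
   forall (phi : R * 'rV[R]_d -> R), smooth phi ->
   forall x : 'rV[R]_d,
   exists C : R, exists delta : R, 0 < delta /\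
     forall dx : R, 0 < dx < delta ->
       `| (phi (n%:R * (dx / lam), x)
            - starting_scheme dx c M s eps S Wc n (fun y => phi (0, y)) x)
            / (n%:R * dx / lam)
          - ('D_1 (fun t => phi (t, x)) 0
             + lam * (dop (Gmx c M ord0 ord0) (fun y => phi (0, y)) x
                      + \sum_(r < q.+1 | r != ord0)
                          eps r * dop (Gmx c M ord0 r) (fun y => phi (0, y)) x)) |
       <= C * dx)
  /\
  (forall (psi : 'rV[R]_d -> R), smooth psi ->
   forall x : 'rV[R]_d,
   exists C : R, exists delta : R, 0 < delta /\
     forall dx : R, 0 < dx < delta ->
       `| wop dx S Wc ord0 psi x - psi x | <= C * dx ^+ 2).
Proof.
set AN := An R d q M s eps S Wc.
set BN := Bn R d q c M s eps S Wc.
have Ainv0 : Inv R d q c M eps (AN 0).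
  split; first by rewrite /AN /=; under eq_bigr do rewrite mulr1; exact: hW0.
  by move=> r r0 g0; rewrite /AN /=; under eq_bigr do rewrite mulr1; exact: hWr.
have Ainv : forall n, Inv R d q c M eps (AN n).
  by elim => // n IH; rewrite /AN /=; exact: Inv_next.
have B00 : BN 0 ord0 = 0.
  apply/matrixP => i l; rewrite /BN /= summxE !mxE (ord1 i).
  transitivity (- \sum_(e <- S) Wc ord0 e * (e ord0 l)%:~R); last by rewrite hW1 oppr0.
  rewrite -sumrN; apply: eq_bigr => e _.
  by rewrite !mxE mul1r add0r mulrN.
have Bn0 : forall n, BN n ord0 = - (n%:R) *: Gs R d q c M eps.
  elim => [|n IH]; first by rewrite B00 oppr0 scale0r.
  rewrite /BN /= Bnext0 // Inv_sum // -/BN IH.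
  by rewrite mulrSr opprD scalerDl scaleN1r.
have dGs : forall f y, dop (Gs R d q c M eps) f y = dop (Gmx c M ord0 ord0) f y
    + \sum_(r < q.+1 | r != ord0) eps r * dop (Gmx c M ord0 r) f y.
  move=> f y; rewrite /Gs dop_sum (bigD1 ord0) //= dopZ heps mul1r.
  by congr (_ + _); apply: eq_big => [r|r _] //; rewrite dopZ.
split.
  move=> n n0 phi sp x.
  have sf := smooth_slice _ sp.
  have [C1 [d1 [d10 H1]]] := Good_iter _ _ _ c M s eps S Wc _ sf n ord0 x.
  have [C2 [d2 [d20 H2]]] := taylorU _ sp ((0:R), x) ((1:R), (0:'rV[R]_d)).
  have nR0 : 0 < n%:R :> R by rewrite ltr0n.
  exists (C2 * n%:R / lam + C1 * lam / n%:R), (Num.min d1 (d2 * lam / n%:R)).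
  split; first by rewrite lt_min d10 /= divr_gt0 // mulr_gt0.
  move=> dx /andP[dx0]; rewrite lt_min => /andP[dd1 dd2].
  have xx : forall (W : normedModType R) (z : W) (e : R), 0 < e -> `|z - z| < e.
    by move=> W z e e0; rewrite subrr normr0.
  have E1 := H1 dx x (ltac:(by rewrite dx0 dd1)) (xx _ x _ d10).
  rewrite -/AN -/BN (Ainv n).1 Bn0 dopZ dGs in E1.
  have hP : `|n%:R * (dx / lam)| < d2.
    rewrite gtr0_norm; last by rewrite mulr_gt0 // divr_gt0.
    have e2 : n%:R * ((d2 * lam / n%:R) / lam) = d2.
      by field; rewrite !gt_eqF.
    have e : n%:R * (dx / lam) < n%:R * ((d2 * lam / n%:R) / lam).
      by rewrite ltr_pM2l // ltr_pM2r ?invr_gt0.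
    by rewrite e2 in e.
  have E2 := H2 ((0:R), x) (n%:R * (dx / lam)) (xx _ _ _ d20) hP.
  rewrite pair_lin mulr1 addr0 scaler0 add0r -time_deriv in E2.
  exact: (@final_alg R (phi (n%:R * (dx / lam), x)) _ _ _ _ _ _ _ _ _ dx0 hlam nR0 E1 E2).
move=> psi spsi x.
have [C [dl [d0 H]]] := Good_wop _ _ _ S Wc _ spsi ord0 x.
exists C, dl; split => // dx /andP[dx0 ddl].
have := H dx x (ltac:(by rewrite dx0 ddl)) (ltac:(by rewrite subrr normr0)).
have A1 : \sum_(e <- S) Wc ord0 e * 1 = 1 by under eq_bigr do rewrite mulr1; exact: hW0.
have B0 : \sum_(e <- S) Wc ord0 e *: (0 - 1 *: intvec e) = 0 :> 'rV[R]_d.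
  apply/matrixP => i l; rewrite summxE !mxE (ord1 i).
  transitivity (- \sum_(e <- S) Wc ord0 e * (e ord0 l)%:~R); last by rewrite hW1 oppr0.
  rewrite -sumrN; apply: eq_bigr => e _.
  by rewrite !mxE mul1r add0r mulrN.
by rewrite A1 B0 dop0 mulr0 addr0 mul1r.
Qed.
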